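(* Let $\kappa$ be an infinite cardinal and let $X$ be a strongly zero-dimensional space. Then $X$ is an $F_\kappa$-space if and only if its Stone–Čech compactification $\beta X$ is an $F_\kappa$-space.
   Context: A space is zero-dimensional if it has a base of clopen sets; a Tychonoff space $X$ is strongly zero-dimensional if $\beta X$ is zero-dimensional. For a zero-dimensional space $X$ and an open $U\subseteq X$, the ($X$-)type $\tau(U)$ is the least cardinal $\tau$ such that $U$ is a union of $\tau$ many clopen subsets of $X$. A zero-dimensional space is an $F_\kappa$-space if every open subset of type less than $\kappa$ is $C^*$-embedded (every bounded continuous real-valued function on it extends continuously to the whole space). *)

(* Defs.v *)
From Stdlib Require Import Reals List.
Open Scope R_scope.

Record topology (X : Type) := Topology {
  open : (X -> Prop) -> Prop;
  open_full : open (fun _ => True);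
  open_inter : forall U V, open U -> open V -> open (fun x => U x /\ V x);
  open_union : forall F : (X -> Prop) -> Prop,
      (forall U, F U -> open U) -> open (fun x => exists U, F U /\ U x)
}.
Arguments open {X} t _.

Definition closed {X} (T : topology X) (F : X -> Prop) : Prop :=
  open T (fun x => ~ F x).

Definition clopen {X} (T : topology X) (C : X -> Prop) : Prop :=
  open T C /\ closed T C.

Definition continuous {X Y} (TX : topology X) (TY : topology Y) (f : X -> Y) : Prop :=
  forall V, open TY V -> open TX (fun x => V (f x)).

Definition continuous_R {X} (T : topology X) (f : X -> R) : Prop :=
  forall W, open_set W -> open T (fun x => W (f x)).

(** Continuity of (the restriction to [U] of) a real-valued function,
    [U] carrying the subspace topology. *)
Definition continuous_R_on {X} (T : topology X) (U : X -> Prop) (f : X -> R) : Prop :=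
  forall W, open_set W ->
    exists O, open T O /\ forall x, U x -> (W (f x) <-> O x).

Definition C_star_embedded {X} (T : topology X) (U : X -> Prop) : Prop :=
  forall f : X -> R,
    continuous_R_on T U f ->
    (exists M, forall x, U x -> Rabs (f x) <= M) ->
    exists g : X -> R, continuous_R T g /\ forall x, U x -> g x = f x.

Definition zero_dim {X} (T : topology X) : Prop :=
  forall U x, open T U -> U x -> exists C, clopen T C /\ C x /\ forall y, C y -> U y.

Definition hausdorff {X} (T : topology X) : Prop :=
  forall x y, x <> y -> exists U V, open T U /\ open T V /\ U x /\ V y /\
    forall z, ~ (U z /\ V z).

Definition compact {X} (T : topology X) : Prop :=
  forall F : (X -> Prop) -> Prop,
    (forall U, F U -> open T U) ->
    (forall x, exists U, F U /\ U x) ->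
    exists l : list (X -> Prop), (forall U, In U l -> F U) /\
      forall x, exists U, In U l /\ U x.

Definition tychonoff {X} (T : topology X) : Prop :=
  (forall x, closed T (fun y => y = x)) /\
  (forall (F : X -> Prop) x, closed T F -> ~ F x ->
     exists f : X -> R, continuous_R T f /\ (forall y, 0 <= f y <= 1) /\
       f x = 0 /\ forall y, F y -> f y = 1).

Definition embedding {X Y} (TX : topology X) (TY : topology Y) (e : X -> Y) : Prop :=
  continuous TX TY e /\ (forall x x', e x = e x' -> x = x') /\
  forall U, open TX U -> exists V, open TY V /\ forall x, U x <-> V (e x).

Definition dense_image {X Y} (TY : topology Y) (e : X -> Y) : Prop :=
  forall V, open TY V -> (exists y, V y) -> exists x, V (e x).

Definition stone_cech {X Y} (TX : topology X) (TY : topology Y) (e : X -> Y) : Prop :=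
  compact TY /\ hausdorff TY /\ embedding TX TY e /\ dense_image TY e /\
  forall (Z : Type) (TZ : topology Z) (h : X -> Z),
    compact TZ -> hausdorff TZ -> continuous TX TZ h ->
    exists H : Y -> Z, continuous TY TZ H /\ forall x, H (e x) = h x.

(** Cardinals are represented by types; |I| < |K|. *)
Definition card_lt (I K : Type) : Prop :=
  (exists f : I -> K, forall i j, f i = f j -> i = j) /\
  ~ (exists g : K -> I, forall a b, g a = g b -> a = b).

Definition infinite_type (K : Type) : Prop :=
  exists f : nat -> K, forall i j, f i = f j -> i = j.

(** The type tau(U) of [U] is less than |K|: [U] is a union of fewer than
    |K| many clopen subsets of the space (tau(U) being the least such
    cardinal, tau(U) < |K| iff some such family has size < |K|). *)
Definition type_lt {X} (T : topology X) (U : X -> Prop) (K : Type) : Prop :=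
  exists (I : Type) (C : I -> X -> Prop),
    card_lt I K /\ (forall i, clopen T (C i)) /\
    forall x, U x <-> exists i, C i x.

Definition F_kappa_space (K : Type) {X} (T : topology X) : Prop :=
  zero_dim T /\
  forall U, open T U -> type_lt T U K -> C_star_embedded T U.

(* Main.v *)
Require Import Defs.
From Stdlib Require Import Reals List Lra Classical ClassicalEpsilon FunctionalExtensionality PropExtensionality.
Open Scope R_scope.

Lemma open_ext {X} (T : topology X) (U V : X -> Prop) :
  (forall x, U x <-> V x) -> open T U -> open T V.
Proof.
  intros H HU. replace V with U; auto.
  apply functional_extensionality; intro x; apply propositional_extensionality; auto.
Qed.

Lemma open_empty {X} (T : topology X) : open T (fun _ => False).
Proof.
  apply (open_ext T (fun x => exists U, (fun _ : X -> Prop => False) U /\ U x)).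
  - intros x; split; [intros [U [[] _]] | intros []].
  - apply open_union; intros U [].
Qed.

Lemma open_or {X} (T : topology X) A B : open T A -> open T B -> open T (fun x => A x \/ B x).
Proof.
  intros HA HB.
  apply (open_ext T (fun x => exists U, (U = A \/ U = B) /\ U x)).
  - intros x; split.
    + intros [U [[-> | ->] H]]; auto.
    + intros [H|H]; eauto.
  - apply open_union; intros U [-> | ->]; auto.
Qed.

Lemma open_const {X} (T : topology X) (P : Prop) : open T (fun _ => P).
Proof.
  destruct (classic P) as [H|H].
  - apply (open_ext T (fun _ => True)); [tauto | apply open_full].
  - apply (open_ext T (fun _ => False)); [tauto | apply open_empty].
Qed.

Lemma open_piece {X} (T : topology X) C A B : clopen T C -> open T A -> open T B ->
  open T (fun x => (C x /\ A x) \/ (~ C x /\ B x)).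
Proof.
  intros [HC1 HC2] HA HB. apply open_or; apply open_inter; auto.
Qed.

Lemma cont_on_of {X} (T : topology X) U g : continuous_R T g -> continuous_R_on T U g.
Proof. intros Hg W HW. exists (fun x => W (g x)); split; [apply Hg; auto | tauto]. Qed.

Lemma agree_dense {X Y} (TY : topology Y) (e : X -> Y) (O : Y -> Prop) (g1 g2 : Y -> R) :
  dense_image TY e -> open TY O -> continuous_R_on TY O g1 -> continuous_R_on TY O g2 ->
  (forall x, O (e x) -> g1 (e x) = g2 (e x)) -> forall y, O y -> g1 y = g2 y.
Proof.
  intros Hd HO H1 H2 Hag y Hy.
  destruct (Req_dec (g1 y) (g2 y)) as [E|NE]; auto. exfalso.
  assert (Hpos : 0 < Rabs (g1 y - g2 y) / 2).
  { assert (0 < Rabs (g1 y - g2 y)) by (apply Rabs_pos_lt; lra). lra. }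
  set (d := mkposreal _ Hpos).
  destruct (H1 (disc (g1 y) d) (disc_P1 _ _)) as [O1 [HO1 E1]].
  destruct (H2 (disc (g2 y) d) (disc_P1 _ _)) as [O2 [HO2 E2]].
  destruct (Hd (fun z => (O z /\ O1 z) /\ O2 z)) as [x [[Hx1 Hx2] Hx3]].
  - repeat apply open_inter; auto.
  - exists y. split; [split|]; auto.
    + apply E1; auto. unfold disc; rewrite Rminus_diag, Rabs_R0; apply cond_pos.
    + apply E2; auto. unfold disc; rewrite Rminus_diag, Rabs_R0; apply cond_pos.
  - apply E1 in Hx2; auto. apply E2 in Hx3; auto. rewrite Hag in Hx2 by auto.
    unfold disc, d in *; simpl in *. revert Hx2 Hx3 NE.
    generalize (g1 y) (g2 y) (g2 (e x)). intros a b c.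
    unfold Rabs; repeat destruct Rcase_abs; lra.
Qed.

Definition clamp (M r : R) : R := Rmax (- M) (Rmin M r).

Lemma clamp_lip M r s : 0 <= M -> Rabs (clamp M s - clamp M r) <= Rabs (s - r).
Proof.
  intros HM. unfold clamp, Rmax, Rmin.
  repeat destruct Rle_dec; unfold Rabs; repeat destruct Rcase_abs; lra.
Qed.

Lemma clamp_id M r : Rabs r <= M -> clamp M r = r.
Proof.
  intros H. unfold clamp, Rmax, Rmin. revert H.
  repeat destruct Rle_dec; unfold Rabs; repeat destruct Rcase_abs; lra.
Qed.

Lemma clamp_bound M r : 0 <= M -> - M <= clamp M r <= M.
Proof. intros HM. unfold clamp, Rmax, Rmin. repeat destruct Rle_dec; lra. Qed.

Lemma clamp_open M W : 0 <= M -> open_set W -> open_set (fun r => W (clamp M r)).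
Proof.
  intros HM HW r Hr. destruct (HW _ Hr) as [d Hd].
  exists d. intros s Hs. apply Hd. unfold disc in *.
  eapply Rle_lt_trans; [apply clamp_lip; auto | auto].
Qed.

Section Iv.
Variable M : R.
Hypothesis HM : 0 <= M.

Definition Iv := { r : R | - M <= r <= M }.

Definition iopen (U : Iv -> Prop) : Prop :=
  exists O, open_set O /\ forall z, U z <-> O (proj1_sig z).

Lemma iopen_full : iopen (fun _ => True).
Proof. exists (fun _ => True); split; [apply open_set_P5 | tauto]. Qed.

Lemma iopen_inter U V : iopen U -> iopen V -> iopen (fun x => U x /\ V x).
Proof.
  intros [O1 [H1 E1]] [O2 [H2 E2]].
  exists (intersection_domain O1 O2); split; [apply open_set_P3; auto|].
  intros z; unfold intersection_domain; rewrite E1, E2; tauto.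
Qed.

Lemma iopen_union (F : (Iv -> Prop) -> Prop) :
  (forall U, F U -> iopen U) -> iopen (fun x => exists U, F U /\ U x).
Proof.
  intros HF.
  exists (fun r => exists U O, F U /\ open_set O /\ (forall z, U z <-> O (proj1_sig z)) /\ O r).
  split.
  - intros r [U [O [HU [HO [EO Hr]]]]]. destruct (HO r Hr) as [d Hd].
    exists d. intros s Hs. exists U, O; split; [auto|split; [auto|split; [auto|apply Hd; auto]]].
  - intros z; split.
    + intros [U [HU Hz]]. destruct (HF U HU) as [O [HO EO]].
      exists U, O; split; [auto|split; [auto|split; [auto|apply EO; auto]]].
    + intros [U [O [HU [HO [EO Hr]]]]]. exists U; split; auto. apply EO; auto.
Qed.

Definition Tiv : topology Iv := Topology Iv iopen iopen_full iopen_inter iopen_union.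

Definition clampZ (r : R) : Iv := exist _ (clamp M r) (clamp_bound M r HM).

Lemma Tiv_hausdorff : hausdorff Tiv.
Proof.
  intros [a Ha] [b Hb] Hne.
  assert (Hab : a <> b) by (intro; subst; apply Hne; f_equal; apply proof_irrelevance).
  assert (Hpos : 0 < Rabs (a - b) / 2).
  { assert (0 < Rabs (a - b)) by (apply Rabs_pos_lt; lra). lra. }
  set (d := mkposreal _ Hpos).
  exists (fun z => disc a d (proj1_sig z)), (fun z => disc b d (proj1_sig z)).
  split; [|split; [|split; [|split]]].
  - exists (disc a d); split; [apply disc_P1 | tauto].
  - exists (disc b d); split; [apply disc_P1 | tauto].
  - unfold disc; simpl; rewrite Rminus_diag, Rabs_R0; auto.
  - unfold disc; simpl; rewrite Rminus_diag, Rabs_R0; auto.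
  - intros [c Hc] [H1 H2]. unfold disc, d in *; simpl in *. revert H1 H2 Hab.
    unfold Rabs; repeat destruct Rcase_abs; lra.
Qed.

Lemma Tiv_compact : Defs.compact Tiv.
Proof.
  intros F HF Hcov.
  assert (ch : forall z : Iv, { p : (Iv -> Prop) * (R -> Prop) |
     F (fst p) /\ fst p z /\ open_set (snd p) /\ forall w, fst p w <-> snd p (proj1_sig w) }).
  { intros z. apply constructive_indefinite_description.
    destruct (Hcov z) as [U [HU Hz]]. destruct (HF U HU) as [O [HO EO]].
    exists (U, O); simpl; auto. }
  set (fam_f := fun x y => (- M <= x <= M) /\ snd (proj1_sig (ch (clampZ x))) y).
  assert (Hcond : forall x, (exists y, fam_f x y) -> - M <= x <= M).
  { intros x [y [Hx _]]; auto. }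
  set (fam := mkfamily (fun x => - M <= x <= M) fam_f Hcond).
  destruct (compact_P3 (- M) M fam) as [D [Hc [l Hl]]].
  - split.
    + intros x Hx. exists x. unfold fam; simpl; unfold fam_f. split; auto.
      pose proof (proj2_sig (ch (clampZ x))) as [_ [Hp [_ Ep]]].
      apply Ep in Hp. simpl in Hp. rewrite clamp_id in Hp; auto.
      unfold Rabs; destruct Rcase_abs; lra.
    + intros x r Hr. simpl in Hr. unfold fam_f in Hr. destruct Hr as [Hx Hr].
      pose proof (proj2_sig (ch (clampZ x))) as [_ [_ [Hp _]]].
      destruct (Hp r Hr) as [d Hd]. exists d. intros s Hs. split; auto.
  - exists (map (fun x => fst (proj1_sig (ch (clampZ x)))) l). split.
    + intros U HU. apply in_map_iff in HU. destruct HU as [x [<- _]].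
      pose proof (proj2_sig (ch (clampZ x))) as [Hp _]; auto.
    + intros [r Hr]. destruct (Hc r Hr) as [y [Hy HDy]]. simpl in Hy.
      unfold fam_f in Hy. destruct Hy as [Hyi Hy].
      exists (fst (proj1_sig (ch (clampZ y)))). split.
      * apply in_map_iff. exists y; split; auto. apply Hl. split; auto.
      * pose proof (proj2_sig (ch (clampZ y))) as [_ [_ [_ Ep]]]. apply Ep; auto.
Qed.

End Iv.

Definition Tbool : topology bool := Topology bool (fun _ => True) I (fun _ _ _ _ => I) (fun _ _ => I).

Lemma Tbool_hausdorff : hausdorff Tbool.
Proof.
  intros x y H. exists (fun z => z = x), (fun z => z = y). simpl.
  repeat split; auto. intros z [-> ->]; auto.
Qed.

Lemma Tbool_compact : Defs.compact Tbool.
Proof.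
  intros F _ Hcov. destruct (Hcov true) as [U1 [H1 E1]]. destruct (Hcov false) as [U2 [H2 E2]].
  exists (U1 :: U2 :: nil). split.
  - intros U [<- | [<- | []]]; auto.
  - intros [|]; [exists U1 | exists U2]; simpl; auto.
Qed.

Lemma open_iunion {X} (T : topology X) {J : Type} (A : J -> X -> Prop) :
  (forall i, open T (A i)) -> open T (fun x => exists i, A i x).
Proof.
  intros H. apply (open_ext T (fun x => exists W, (exists i, W = A i) /\ W x)).
  - intros x; split; [intros [W [[i ->] Hx]]; eauto | intros [i Hx]; exists (A i); eauto].
  - apply open_union; intros W [i ->]; auto.
Qed.

Lemma extend_bounded {X Y} (TX : topology X) (TY : topology Y) (e : X -> Y) (M : R) (g : X -> R) :
  stone_cech TX TY e -> 0 <= M -> continuous_R TX g ->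
  exists G : Y -> R, continuous_R TY G /\ (forall x, G (e x) = clamp M (g x)) /\
    (forall y, Rabs (G y) <= M).
Proof.
  intros [_ [_ [_ [_ Hsc]]]] HM Hg.
  destruct (Hsc _ (Tiv M) (fun x => clampZ M HM (g x)) (Tiv_compact M HM) (Tiv_hausdorff M))
    as [H [HH EH]].
  - intros V [O [HO EO]]. apply (open_ext TX (fun x => O (clamp M (g x)))).
    + intros x; rewrite EO; simpl; tauto.
    + apply (Hg (fun r => O (clamp M r))). apply clamp_open; auto.
  - exists (fun y => proj1_sig (H y)). split; [|split].
    + intros W HW. apply (HH (fun z => W (proj1_sig z))). exists W; split; auto; tauto.
    + intros x; rewrite EH; reflexivity.
    + intros y; destruct (H y) as [r Hr]; simpl. unfold Rabs; destruct Rcase_abs; lra.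
Qed.

Lemma extend_clopen {X Y} (TX : topology X) (TY : topology Y) (e : X -> Y) C :
  stone_cech TX TY e -> clopen TX C ->
  exists D, clopen TY D /\ forall x, D (e x) <-> C x.
Proof.
  intros [_ [_ [_ [_ Hsc]]]] HC.
  set (h := fun x => if excluded_middle_informative (C x) then true else false).
  destruct (Hsc _ Tbool h Tbool_compact Tbool_hausdorff) as [H [HH EH]].
  - intros V _. apply (open_ext TX (fun x => (C x /\ V true) \/ (~ C x /\ V false))).
    + intros x; unfold h; destruct excluded_middle_informative; tauto.
    + apply open_piece; auto; apply open_const.
  - exists (fun y => H y = true). split; [split|].
    + apply (HH (fun b => b = true)); exact I.
    + unfold closed. apply (HH (fun b => ~ b = true)); exact I.
    + intros x; rewrite EH; unfold h; destruct excluded_middle_informative; intuition congruence.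
Qed.

Lemma pull_clopen {X Y} (TX : topology X) (TY : topology Y) (e : X -> Y) C :
  continuous TX TY e -> clopen TY C -> clopen TX (fun x => C (e x)).
Proof.
  intros He [H1 H2]; split; [apply He; auto | unfold closed; apply (He (fun y => ~ C y)); auto].
Qed.

Theorem theorem5p1 (K : Type) (hK : infinite_type K)
  (X : Type) (TX : topology X) (Y : Type) (TY : topology Y) (e : X -> Y)
  (hX : tychonoff TX) (hbeta : stone_cech TX TY e) (hsz : zero_dim TY) :
  F_kappa_space K TX <-> F_kappa_space K TY.
Proof.
  pose proof hbeta as Hb. destruct hbeta as [HYc [HYh [[He [Hinj Hemb]] [Hd Hsc]]]].
  split.
  - intros [HzX HFX]. split; auto.
    intros U HU [Ix [C [HI [HC HUC]]]] f Hf [M0 HM0].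
    set (M := Rabs M0).
    assert (HM : 0 <= M) by apply Rabs_pos.
    assert (HfM : forall y, U y -> Rabs (f y) <= M).
    { intros y Hy; specialize (HM0 y Hy); pose proof (Rle_abs M0); unfold M; lra. }
    assert (HUe : open TX (fun x => U (e x))) by (apply He; auto).
    assert (Hce : C_star_embedded TX (fun x => U (e x))).
    { apply HFX; auto. exists Ix, (fun i x => C i (e x)). split; auto. split.
      - intros i; apply (pull_clopen TX TY e (C i)); auto.
      - intros x; apply HUC. }
    destruct (Hce (fun x => f (e x))) as [g [Hg Hgf]].
    + intros W HW. destruct (Hf W HW) as [O [HO EO]]. exists (fun x => O (e x)).
      split; [apply He; auto|]. intros x Hx; apply EO; auto.
    + exists M; intros x Hx; auto.
    + destruct (extend_bounded TX TY e M g Hb HM Hg) as [G [HG [EG _]]].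
      exists G; split; auto.
      apply (agree_dense TY e U G f Hd HU (cont_on_of TY U G HG) Hf).
      intros x Hx. rewrite EG, Hgf by auto. apply clamp_id; auto.
  - intros [HzY HFY]. split.
    + intros U x HU Hx. destruct (Hemb U HU) as [V [HV EV]].
      destruct (HzY V (e x) HV) as [C [HC [Cx CV]]]; [apply EV; auto|].
      exists (fun z => C (e z)). split; [apply (pull_clopen TX TY e C); auto|]. split; auto.
      intros y Hy; apply EV; auto.
    + intros U HU [Ix [C [HI [HC HUC]]]] f Hf [M0 HM0].
      set (M := Rabs M0). assert (HM : 0 <= M) by apply Rabs_pos.
      assert (HfM : forall x, U x -> Rabs (f x) <= M).
      { intros x Hx; specialize (HM0 x Hx); pose proof (Rle_abs M0); unfold M; lra. }
      assert (HD : forall i, exists D, clopen TY D /\ forall x, D (e x) <-> C i x).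
      { intros i; apply (extend_clopen TX TY e (C i)); auto. }
      set (D := fun i => proj1_sig (constructive_indefinite_description _ (HD i))).
      assert (HDp : forall i, clopen TY (D i) /\ forall x, D i (e x) <-> C i x).
      { intros i; exact (proj2_sig (constructive_indefinite_description _ (HD i))). }
      assert (HG : forall i, exists G : Y -> R, continuous_R TY G /\
                 (forall x, C i x -> G (e x) = f x) /\ forall y, Rabs (G y) <= M).
      { intros i.
        set (h := fun x => if excluded_middle_informative (C i x) then f x else 0).
        assert (Hh : continuous_R TX h).
        { intros W HW. destruct (Hf W HW) as [O [HO EO]].
          apply (open_ext TX (fun x => (C i x /\ O x) \/ (~ C i x /\ W 0))).
          - intros x; unfold h; destruct excluded_middle_informative as [Hc|Hc].
            + assert (Hux : U x) by (apply HUC; eauto). rewrite (EO x Hux). tauto.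
            + tauto.
          - apply open_piece; auto. apply open_const. }
        destruct (extend_bounded TX TY e M h Hb HM Hh) as [G [HG1 [HG2 HG3]]].
        exists G; split; auto; split; auto.
        intros x Hx. rewrite HG2. unfold h; destruct excluded_middle_informative; [|contradiction].
        apply clamp_id, HfM, HUC; eauto. }
      set (G := fun i => proj1_sig (constructive_indefinite_description _ (HG i))).
      assert (HGp : forall i, continuous_R TY (G i) /\ (forall x, C i x -> G i (e x) = f x) /\
                      forall y, Rabs (G i y) <= M).
      { intros i; exact (proj2_sig (constructive_indefinite_description _ (HG i))). }
      clearbody D G.
      assert (Hagr : forall i j y, D i y -> D j y -> G i y = G j y).
      { intros i j y Hi Hj.
        apply (agree_dense TY e (fun y => D i y /\ D j y) (G i) (G j) Hd).
        - apply open_inter; apply HDp.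
        - apply cont_on_of, HGp.
        - apply cont_on_of, HGp.
        - intros x [Hx1 Hx2]. apply HDp in Hx1; apply HDp in Hx2.
          rewrite (proj1 (proj2 (HGp i)) x Hx1), (proj1 (proj2 (HGp j)) x Hx2); auto.
        - auto. }
      set (F := fun y => match excluded_middle_informative (exists i, D i y) with
                         | left H => G (proj1_sig (constructive_indefinite_description _ H)) y
                         | right _ => 0 end).
      assert (HFV : forall i y, D i y -> F y = G i y).
      { intros i y Hy. unfold F. destruct excluded_middle_informative as [H|H]; [|exfalso; eauto].
        apply Hagr; auto. exact (proj2_sig (constructive_indefinite_description _ H)). }
      assert (Hce : C_star_embedded TY (fun y => exists i, D i y)).
      { apply HFY.
        - apply open_iunion; intros i; apply HDp.
        - exists Ix, D; split; auto; split; [intros i; apply HDp | intros y; tauto]. }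
      destruct (Hce F) as [Gf [HGf EGf]].
      * intros W HW. exists (fun y => exists i, D i y /\ W (G i y)). split.
        -- apply open_iunion; intros i; apply open_inter; [apply HDp | apply HGp; auto].
        -- intros y [i Hi]. rewrite (HFV i y Hi). split.
           ++ intros Hw; eauto.
           ++ intros [j [Hj Hw]]. rewrite (Hagr i j y Hi Hj); auto.
      * exists M. intros y [i Hi]. rewrite (HFV i y Hi). apply HGp.
      * exists (fun x => Gf (e x)). split.
        -- intros W HW. apply (He (fun y => W (Gf y))). apply HGf; auto.
        -- intros x Hx. destruct (proj1 (HUC x) Hx) as [i Hi].
           assert (HDi : D i (e x)) by (apply HDp; auto).
           rewrite EGf by (exists i; auto). rewrite (HFV i _ HDi). apply HGp; auto.
Qed.
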